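(* Let $v,\alpha,h\in\mathbb{R}^d$ with $|\alpha|\ge|h|$ and $\alpha\cdot h=0$. Then $$\mu(v-h)\mu(v+\alpha)=\mu(v)\mu(v+\alpha-h)\le\mu^{1/9}(v)\mu^{1/9}(v+\alpha),$$ $$\mu(v-h)\mu(v+\alpha-h)\le\mu^{1/20}(v)\mu^{1/20}(v+\alpha).$$
   Context: $\mu(v)=(2\pi)^{-d/2}e^{-|v|^2/2}$ is the standard Gaussian on $\mathbb{R}^d$. *)

(* Defs.v *)
From HB Require Import structures.
From mathcomp Require Import all_boot all_order all_algebra.
From mathcomp Require Import all_classical all_reals all_analysis.
Set Implicit Arguments. Unset Strict Implicit. Unset Printing Implicit Defensive.
Import Order.TTheory GRing.Theory Num.Theory.
Local Open Scope ring_scope.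

Definition dotv (R : realType) (d : nat) (u w : 'rV[R]_d) : R :=
  \sum_(i < d) u 0 i * w 0 i.

Definition enorm (R : realType) (d : nat) (v : 'rV[R]_d) : R :=
  Num.sqrt (dotv v v).

Definition mu (R : realType) (d : nat) (v : 'rV[R]_d) : R :=
  powR (2 * pi) (- (d%:R / 2)) * expR (- (enorm v ^+ 2) / 2).

(* Main.v *)
Require Import Defs.
From mathcomp Require Import all_boot all_order all_algebra.
From mathcomp Require Import all_classical all_reals all_analysis.
From mathcomp Require Import lra.
Import Order.TTheory GRing.Theory Num.Theory.
Local Open Scope ring_scope.

Section H.
Context {R : realType} {d : nat}.
Implicit Types u w z : 'rV[R]_d.

Lemma dotvDl u w z : dotv (u + w) z = dotv u z + dotv w z.
Proof. rewrite /dotv -big_split; apply: eq_bigr => i _; by rewrite !mxE mulrDl. Qed.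
Lemma dotvNl u z : dotv (- u) z = - dotv u z.
Proof. rewrite /dotv -sumrN; apply: eq_bigr => i _; by rewrite !mxE mulNr. Qed.
Lemma dotvZl a u z : dotv (a *: u) z = a * dotv u z.
Proof. rewrite /dotv mulr_sumr; apply: eq_bigr => i _; by rewrite !mxE mulrA. Qed.
Lemma dotvC u z : dotv u z = dotv z u.
Proof. rewrite /dotv; apply: eq_bigr => i _; by rewrite mulrC. Qed.
Lemma dotvDr u w z : dotv z (u + w) = dotv z u + dotv z w.
Proof. by rewrite dotvC dotvDl !(dotvC z). Qed.
Lemma dotvNr u z : dotv z (- u) = - dotv z u.
Proof. by rewrite dotvC dotvNl dotvC. Qed.
Lemma dotvZr a u z : dotv z (a *: u) = a * dotv z u.
Proof. by rewrite dotvC dotvZl dotvC. Qed.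
Lemma dotv_ge0 u : 0 <= dotv u u.
Proof. by apply: sumr_ge0 => i _; rewrite -expr2 sqr_ge0. Qed.

Definition K : R := - (d%:R / 2 * ln (2 * pi)).
Lemma K_le0 : K <= 0.
Proof.
rewrite /K oppr_le0; apply: mulr_ge0; first by apply: divr_ge0.
apply: ln_ge0; have := @pi_ge2 R; lra.
Qed.

Lemma muE u : mu u = expR (K - dotv u u / 2).
Proof.
have h2 : (2 * pi : R) != 0 by have := @pi_ge2 R; rewrite mulf_eq0 => ?; apply/negP; case/orP=>/eqP; lra.
rewrite /mu /powR (negbTE h2) /enorm sqr_sqrtr ?dotv_ge0 // -expRD /K.
by congr expR; rewrite mulNr mulNr.
Qed.

Lemma powexp (y r : R) : powR (expR y) r = expR (r * y).
Proof. by rewrite /powR gt_eqF ?expR_gt0 // expRK. Qed.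
End H.

Theorem lemma3p3 (R : realType) (d : nat) (v alpha h : 'rV[R]_d) :
  enorm h <= enorm alpha -> dotv alpha h = 0 ->
  [/\ mu (v - h) * mu (v + alpha) = mu v * mu (v + alpha - h),
      mu v * mu (v + alpha - h) <= powR (mu v) (1/9) * powR (mu (v + alpha)) (1/9)
    & mu (v - h) * mu (v + alpha - h) <= powR (mu v) (1/20) * powR (mu (v + alpha)) (1/20)].
Proof.
move=> hn z0.
have HA : dotv h h <= dotv alpha alpha by rewrite -ler_sqrt ?dotv_ge0.
have Kl := @K_le0 R d.
have S1 := dotv_ge0 (16 *: v + 8 *: alpha - 9 *: h).
have S2 := dotv_ge0 (38 *: v + 19 *: alpha - 40 *: h).
have S3 := dotv_ge0 alpha. have S4 := dotv_ge0 h.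
move: S1 S2.
rewrite !muE !powexp -!expRD !ler_expR.
rewrite !(dotvDl, dotvDr, dotvNl, dotvNr, dotvZl, dotvZr).
rewrite (dotvC h alpha) z0 (dotvC alpha v) (dotvC h v).
move=> S1 S2; split.
- congr expR; idtac "G1"; lra.
- idtac "G"; lra.
- idtac "G"; lra.
Qed.
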